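(* Let $a,q$ be complex numbers with $q\ne0$, and let $B_{n,1}(a,0)$ ($n\ge1$) be defined by $z=\sum_{n=1}^\infty B_{n,1}(a,0)\,z^n(az;q)_n$ in $\mathbb{C}[[z]]$. Then every $F(z)\in\mathbb{C}[[z]]$ has the expansion $$F(z)=\sum_{n=0}^{\infty}c_nz^{n}(az;q)_n,$$ where $$c_n=[z^{n}]\Big\{\frac{F(z)}{(az;q)_n}\Big\}-a\sum_{k=0}^{n-1}B_{n-k,1}(a,0)\,q^{(n-k)k}\,[z^{k}]\Big\{\frac{F(z)}{(az;q)_{k+1}}\Big\}.$$
   Context: $(x;q)_n=\prod_{j=0}^{n-1}(1-xq^j)$ for $n\ge0$, $(x;q)_0=1$; quotients are regarded as formal power series in $z$, and $[z^m]\{f\}$ is the coefficient of $z^m$ in $f$. Empty sums are $0$. *)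

(* Defs.v *)
(* Complex numbers are modelled as [R[i]] (mathcomp-real-closed
   [complex]) over an arbitrary [R : realType]; formal power series in z over a
   ring are modelled as coefficient functions [nat -> C]. *)
From HB Require Import structures.
From mathcomp Require Import all_boot all_order all_algebra.
From mathcomp Require Import reals complex.
Set Implicit Arguments. Unset Strict Implicit. Unset Printing Implicit Defensive.
Import Order.TTheory GRing.Theory Num.Theory.
Local Open Scope ring_scope.

Definition qpoch {K : comRingType} (x q : K) (n : nat) : {poly K} :=
  \prod_(j < n) (1 - (x * q ^+ j) *: 'X).

(* Quotient F / P of a formal power series F (coefficients F : nat -> K) by a
   polynomial P with invertible constant term, as a formal power series:
   the unique H with P * H = F, computed by the usual triangular recursion
   H_m = (F_m - sum_{i=1}^m P_i H_{m-i}) / P_0.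
   [fps_div_seq F P m] is the list [H_0; ...; H_m]. *)
Fixpoint fps_div_seq {K : fieldType} (F : nat -> K) (P : {poly K}) (m : nat)
  : seq K :=
  match m with
  | 0 => [:: F 0%N / P`_0]
  | m'.+1 =>
      let s := fps_div_seq F P m' in
      rcons s ((F m - \sum_(i < m) P`_i.+1 * s`_(m' - i)) / P`_0)
  end.

Definition fps_div_coef {K : fieldType} (F : nat -> K) (P : {poly K}) (m : nat)
  : K := (fps_div_seq F P m)`_m.

(* Main.v *)
Require Import Defs.
From HB Require Import structures.
From mathcomp Require Import all_boot all_order all_algebra.
From mathcomp Require Import reals complex.
From mathcomp Require Import ring zify.
Import Order.TTheory GRing.Theory Num.Theory.
Local Open Scope ring_scope.

Section Aux.
Variable K : fieldType.
Implicit Types (a q : K) (F G : nat -> K) (P p r u : {poly K}).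

Lemma qpoch0c a q n : (qpoch a q n)`_0 = 1.
Proof.
rewrite -horner_coef0 /qpoch horner_prod big1 // => i _.
by rewrite !hornerE subr0.
Qed.

Lemma qpochS a q n : qpoch a q n.+1 = qpoch a q n * (1 - (a * q ^+ n) *: 'X).
Proof. by rewrite /qpoch big_ord_recr. Qed.

Lemma qpoch_0 a q : qpoch a q 0 = 1.
Proof. by rewrite /qpoch big_ord0. Qed.

Lemma coefMlin p d i :
  (p * (1 - d *: 'X))`_i = p`_i - d * (if i is i'.+1 then p`_i' else 0).
Proof.
rewrite mulrBr mulr1 -scalerAr coefB coefZ coefMX.
by case: i => [|i] //=; rewrite mulr0.
Qed.

Lemma qpoch_shift a q k j :
  qpoch a q (k + j) = qpoch a q k * qpoch (a * q ^+ k) q j.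
Proof.
elim: j => [|j IH]; first by rewrite addn0 qpoch_0 mulr1.
by rewrite addnS !qpochS IH -mulrA -mulrA exprD.
Qed.

Lemma qpoch_scale a q k j i :
  (qpoch (a * q ^+ k) q j)`_i = q ^+ (k * i) * (qpoch a q j)`_i.
Proof.
elim: j i => [|j IH] i.
  by rewrite !qpoch_0 !coef1; case: i => [|i] /=; rewrite ?muln0 ?expr0 ?mulr1 ?mul1r ?mulr0.
rewrite !qpochS !coefMlin IH; case: i => [|i]; first by rewrite !mulr0 !subr0.
rewrite IH mulnS exprD; ring.
Qed.

Lemma coefM_agree u p r N m :
  (forall i, (i < N)%N -> p`_i = r`_i) -> (m < N)%N -> (u * p)`_m = (u * r)`_m.
Proof.
move=> h hm; rewrite !coefM; apply: eq_bigr => j _; rewrite h //.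
exact: leq_ltn_trans (leq_subr j m) hm.
Qed.

Lemma trM P G N m : (m < N)%N ->
  (P * \poly_(i < N) G i)`_m = \sum_(i < m.+1) P`_i * G (m - i)%N.
Proof.
move=> hm; rewrite coefM; apply: eq_bigr => j _; rewrite coef_poly ifT //.
exact: leq_ltn_trans (leq_subr j m) hm.
Qed.

Lemma fds_size F P m : size (fps_div_seq F P m) = m.+1.
Proof. by elim: m => [|m IH] //=; rewrite size_rcons IH. Qed.

Lemma fds_prefix F P m i : (i <= m)%N -> (fps_div_seq F P m)`_i = fps_div_coef F P i.
Proof.
elim: m i => [|m IH] i.
  by rewrite leqn0 => /eqP ->.
rewrite leq_eqVlt => /orP [/eqP -> //| hi].
by rewrite /= nth_rcons fds_size hi IH.
Qed.

Lemma fdc_S F P m : fps_div_coef F P m.+1 =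
  (F m.+1 - \sum_(i < m.+1) P`_i.+1 * fps_div_coef F P (m - i)%N) / P`_0.
Proof.
rewrite {1}/fps_div_coef /= nth_rcons fds_size ltnn eqxx.
congr ((_ - _) / _); apply: eq_bigr => i _; by rewrite fds_prefix // leq_subr.
Qed.

Lemma fdc_conv F P m : P`_0 = 1 ->
  \sum_(i < m.+1) P`_i * fps_div_coef F P (m - i)%N = F m.
Proof.
move=> hP; case: m => [|m].
  by rewrite big_ord1 /fps_div_coef /= hP divr1 mul1r.
rewrite big_ord_recl subn0 fdc_S hP divr1 mul1r.
by rewrite subrK.
Qed.

Lemma fdc_uniq F P G : P`_0 = 1 ->
  (forall m, \sum_(i < m.+1) P`_i * G (m - i)%N = F m) ->
  forall m, G m = fps_div_coef F P m.
Proof.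
move=> hP hG m.
suff: forall i, (i <= m)%N -> G i = fps_div_coef F P i by apply.
elim: m => [|m IH] i.
  rewrite leqn0 => /eqP ->; have := hG 0%N.
  by rewrite big_ord1 hP mul1r /fps_div_coef /= hP divr1.
rewrite leq_eqVlt => /orP [/eqP ->| hi]; last exact: IH.
have e1 := hG m.+1; have e2 := fdc_conv F P m.+1 hP.
rewrite big_ord_recl hP mul1r subn0 in e1.
rewrite big_ord_recl hP mul1r subn0 in e2.
have es : \sum_(i < m.+1) P`_(lift ord0 i) * G (m.+1 - lift ord0 i)%N
        = \sum_(i < m.+1) P`_(lift ord0 i) * fps_div_coef F P (m.+1 - lift ord0 i)%N.
  apply: eq_bigr => j _; rewrite IH //; exact: leq_subr.
apply: (addIr (\sum_(i < m.+1) P`_(lift ord0 i) * G (m.+1 - lift ord0 i)%N)).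
by rewrite e1 es e2.
Qed.

Lemma reidx0 (phi : nat -> K) k N :
  \sum_(0 <= n < N) (if (k < n)%N then phi n else 0)
  = \sum_(1 <= j < N - k) phi (k + j)%N.
Proof.
elim: N => [|N IH]; first by rewrite !big_geq.
rewrite big_nat_recr //= IH; case: (ltnP k N) => h.
  rewrite subSn ?(ltnW h) // big_nat_recr; last by rewrite subn_gt0.
  by rewrite subnKC // ltnW.
rewrite addr0 !big_geq //; lia.
Qed.

Lemma reidx (phi : nat -> K) k N : (forall n, (N <= n)%N -> phi n = 0) ->
  \sum_(n < N) (if (k < n)%N then phi n else 0)
  = \sum_(1 <= j < N) phi (k + j)%N.
Proof.
move=> h0; rewrite -(big_mkord xpredT (fun n => if (k < n)%N then phi n else 0)) reidx0.
case: (leqP N k) => hk.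
  rewrite big_geq; last by lia.
  symmetry; rewrite big_nat_cond big1 // => j /andP [/andP [hj _] _].
  apply: h0; lia.
rewrite [RHS](@big_cat_nat _ _ _ (N - k)) /=; [|lia|lia].
rewrite [X in _ = _ + X]big_nat_cond [X in _ = _ + X]big1 ?addr0 // => j /andP [/andP [hj _] _].
apply: h0; lia.
Qed.

Ltac decide_ifs :=
  repeat match goal with
  | |- context[if ?b then _ else _] =>
      (have -> : b = true by lia) || (have -> : b = false by lia)
  | |- context[(?x == ?y :> nat)] =>
      (have -> : (x == y :> nat) = true by lia) || (have -> : (x == y :> nat) = false by lia)
  end.

Variables (a q : K) (B F : nat -> K).
Local Notation pi := (qpoch a q).
Local Notation H n := (fps_div_coef F (qpoch a q n)).

Lemma F1 n N m : (m < N)%N -> (pi n * \poly_(i < N) H n i)`_m = F m.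
Proof. by move=> hm; rewrite trM // fdc_conv // qpoch0c. Qed.

Lemma F2 n m : H n m = H n.+1 m - (a * q ^+ n) * (if m is m'.+1 then H n.+1 m' else 0).
Proof.
symmetry.
pose G m := H n.+1 m - (a * q ^+ n) * (if m is m'.+1 then H n.+1 m' else 0).
apply: (fdc_uniq F (pi n) G (qpoch0c _ _ _)) => m0.
rewrite -(trM _ _ _ _ (ltnSn m0)).
rewrite (coefM_agree _ _ (\poly_(i < m0.+1) H n.+1 i * (1 - (a*q^+n) *: 'X)) _ _ _ (ltnSn m0)).
  by rewrite mulrA mulrAC -qpochS F1.
move=> i hi; rewrite coefMlin !coef_poly hi /G; case: i hi => [|i] hi //=.
by rewrite coef_poly (ltnW hi).
Qed.

Lemma Lpoly n : (\poly_(i < n.+1) H n.+1 i) * (1 - (a * q ^+ n) *: 'X)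
  = (\poly_(i < n) H n i) + (H n n) *: 'X^n - (a * q ^+ n * (H n.+1 n)) *: 'X^(n.+1).
Proof.
apply/polyP => i; rewrite coefMlin !coefB !coefD !coefZ !coef_poly !coefXn.
case: i => [|i].
  case: n => [|n]; [rewrite (F2 0 0) | rewrite (F2 n.+1 0)]; by rewrite /= ?mulr0 ?mulr1 ?subr0 ?add0r ?addr0.
rewrite coef_poly /=.
case: (ltngtP i.+1 n) => h.
- rewrite (F2 n i.+1) /=; decide_ifs; by rewrite ?mulr0 ?mulr1 ?subr0 ?addr0 ?add0r.
- decide_ifs; case: (ltngtP i n) => h2; try lia; decide_ifs;
    try subst i; by rewrite /= ?mulr0 ?mulr1 ?subr0 ?addr0 ?add0r ?sub0r.
- subst n; decide_ifs; rewrite (F2 i.+1 i.+1) /=.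
  by rewrite /= ?mulr0 ?mulr1 ?subr0 ?addr0 ?add0r ?sub0r.
Qed.

Lemma Ltele N m : (pi N * \poly_(i < N) H N i)`_m =
  \sum_(n < N) ((H n n) * ('X^n * pi n)`_m
                - a * q ^+ n * (H n.+1 n) * ('X^(n.+1) * pi n)`_m).
Proof.
elim: N => [|N IH].
  by rewrite big_ord0 coefM big1 // => j _; rewrite coef_poly /= mulr0.
rewrite big_ord_recr /= -IH {1}qpochS -mulrA [X in pi N * X]mulrC Lpoly.
rewrite !mulrDr mulrN !coefD coefN -!scalerAr !coefZ.
by rewrite [pi N * 'X^N]mulrC [pi N * 'X^(N.+1)]mulrC addrA.
Qed.

Hypothesis hB : forall m : nat,
  \sum_(1 <= n < m.+1) B n * ('X^n * qpoch a q n)`_m = (m == 1)%:R.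

Lemma Lscale2 k j i :
  q ^+ (j * k) * ('X^j * qpoch (a * q ^+ k) q j)`_i = q ^+ (k * i) * ('X^j * pi j)`_i.
Proof.
rewrite !coefXnM; case: ltnP => h; first by rewrite !mulr0.
rewrite qpoch_scale mulrA -exprD; congr (_ ^+ _ * _).
by rewrite mulnC -mulnDr subnKC.
Qed.

Lemma Lstep1 k m :
  \sum_(1 <= j < m.+1) (B j * q ^+ (j * k)) * ('X^(k + j) * pi (k + j))`_m
  = q ^+ k * ('X^(k.+1) * pi k)`_m.
Proof.
set U := 'X^k * pi k.
set W := \sum_(1 <= j < m.+1) (B j * q ^+ (j * k)) *: ('X^j * qpoch (a * q ^+ k) q j).
have eL : \sum_(1 <= j < m.+1) (B j * q ^+ (j * k)) * ('X^(k + j) * pi (k + j))`_m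
          = (U * W)`_m.
  rewrite /W mulr_sumr coef_sum; apply: eq_bigr => j _.
  by rewrite -scalerAr coefZ qpoch_shift exprD /U mulrACA.
have eW : forall i, (i < m.+1)%N -> W`_i = (q ^+ k *: 'X)`_i.
  move=> i hi; rewrite /W coef_sum coefZ coefX.
  transitivity (q ^+ (k * i) * \sum_(1 <= j < m.+1) B j * ('X^j * pi j)`_i).
    rewrite mulr_sumr; apply: eq_bigr => j _.
    by rewrite coefZ -mulrA Lscale2 mulrCA.
  rewrite (@big_cat_nat _ _ _ i.+1) //= hB.
  rewrite [X in _ * (_ + X)]big_nat_cond [X in _ * (_ + X)]big1 ?addr0; last first.
    by move=> j /andP [/andP [hj _] _]; rewrite coefXnM hj mulr0.
  by case: eqP => [->|_]; rewrite ?muln1 ?mulr1 ?mulr0.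
rewrite eL (coefM_agree _ _ _ _ _ eW (ltnSn m)) -scalerAr coefZ /U.
by rewrite mulrAC -exprSr.
Qed.

Lemma Ldouble m :
  \sum_(n < m.+1) (\sum_(k < n) B (n - k)%N * q ^+ ((n - k) * k) * (H k.+1 k))
                  * ('X^n * pi n)`_m
  = \sum_(k < m.+1) (H k.+1 k) * (q ^+ k * ('X^(k.+1) * pi k)`_m).
Proof.
transitivity (\sum_(n < m.+1) \sum_(k < m.+1)
  (if (k < n)%N then B (n - k)%N * q ^+ ((n - k) * k) * (H k.+1 k) * ('X^n * pi n)`_m
   else 0)).
  apply: eq_bigr => n _; rewrite mulr_suml.
  rewrite (big_ord_widen m.+1 (fun k : nat => B (n - k)%N * q ^+ ((n - k) * k) * (H k.+1 k) * ('X^n * pi n)`_m)); last exact: ltnW.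
  by rewrite big_mkcond.
rewrite exchange_big; apply: eq_bigr => k _.
rewrite (reidx (fun n => B (n - k)%N * q ^+ ((n - k) * k) * (H k.+1 k) * ('X^n * pi n)`_m)).
  rewrite -Lstep1 mulr_sumr; apply: eq_bigr => j _; rewrite addKn.
  by rewrite mulrAC [RHS]mulrC.
by move=> n hn; rewrite coefXnM hn mulr0.
Qed.

Lemma main_gen m :
  F m = \sum_(n < m.+1)
    (fps_div_coef F (qpoch a q n) n
     - a * \sum_(k < n) B (n - k)%N * q ^+ ((n - k) * k)
                        * fps_div_coef F (qpoch a q k.+1) k)
    * ('X^n * qpoch a q n)`_m.
Proof.
under eq_bigr do rewrite mulrBl -mulrA.
rewrite sumrB -mulr_sumr Ldouble.
rewrite -(F1 m.+1 m.+1 m (ltnSn m)) Ltele sumrB mulr_sumr; congr (_ - _).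
apply: eq_bigr => k _; ring.
Qed.

End Aux.

(* B n stands for B_{n,1}(a,0), characterised by
     z = sum_{n>=1} B n z^n (az;q)_n   in C[[z]],
   compared coefficientwise (only n <= m contribute to [z^m]). *)
Theorem corollary2p3 (R : realType) (a q : R[i]) (B : nat -> R[i])
  (F : nat -> R[i]) :
  q != 0 ->
  (forall m : nat,
     \sum_(1 <= n < m.+1) B n * ('X^n * qpoch a q n)`_m = (m == 1)%:R) ->
  let c := fun n : nat =>
    fps_div_coef F (qpoch a q n) n
    - a * \sum_(k < n) B (n - k)%N * q ^+ ((n - k) * k)
                        * fps_div_coef F (qpoch a q k.+1) k in
  forall m : nat,
    F m = \sum_(n < m.+1) c n * ('X^n * qpoch a q n)`_m.
Proof.
move=> _ hB c m; rewrite /c.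
exact: (@main_gen _ a q B F hB m).
Qed.
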